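(* (Gronwall-type lemma.) Let $z\in C^{\beta\text{-Hol}}([-r,T],\mathbb{R}^d)$ and suppose there are constants $A,C>0$ such that for all $0\le s\le t\le T$, $$|||z|||_{\beta,[s,t]}\le A+C\big((t-s)^{1-\beta}+(t-s)^{\nu-\beta}|||\omega|||_{\nu,[s,t]}\big)\|z\|_{\infty,\beta,[s-r,t]}.$$ Let $\mu\in(0,\min\{\tfrac12,C\})$ and let $N(t,\omega)$ be the counting function of the stopping times associated with this $C$ and $\mu$. Then for all $t\in[0,T]$, $$\|z_t\|_{\infty,\beta,[-r,0]}\le(1-2\mu)^{-(N(t,\omega)+1)}\Big[\frac{A}{\mu}+\|z\|_{\infty,\beta,[-r,0]}\Big].$$
   Context: $\|\cdot\|$ is the Euclidean norm; $r,T>0$; $z_t(u)=z(t+u)$, $u\in[-r,0]$. For $0<\alpha\le1$: $|||z|||_{\alpha,[a,b]}=\sup_{a\le s<t\le b}\frac{\|z(t)-z(s)\|}{(t-s)^\alpha}$, $\|z\|_{\infty,\alpha,[a,b]}=\sup_{[a,b]}\|z\|+|||z|||_{\alpha,[a,b]}$, $C^{\alpha\text{-Hol}}$ the space where finite. Parameters: $\nu\in(\tfrac12,1]$, $\beta\in(0,\nu)$, $\omega\in C^{\nu\text{-Hol}}([0,T],\mathbb{R})$ with $\lim_{h\to0}\sup_{0\le s<t\le T,\,t-s\le h}\frac{|\omega(t)-\omega(s)|}{(t-s)^\nu}=0$. Stopping times: given $C>0$ and $\mu\in(0,C)$, $t_0=0$, $t_{i+1}=\sup\{t\in[t_i,T]: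 C[(t-t_i)^{1-\beta}+(t-t_i)^{\nu-\beta}|||\omega|||_{\nu,[t_i,t]}]\le\mu\}$; counting function $N(t,\omega):=\#\{i\ge1:t_i<t\}$. *)

(* Defs.v *)
From Stdlib Require Import Reals Lra List Classical ClassicalEpsilon.
Open Scope R_scope.

(* Supremum of a set of reals: the least upper bound if the set is
   nonempty and bounded above, 0 otherwise. *)
Definition Rsup (E : R -> Prop) : R :=
  match excluded_middle_informative (bound E /\ exists x, E x) with
  | left H => proj1_sig (completeness E (proj1 H) (proj2 H))
  | right _ => 0
  end.

(* x^a for real exponent, with the convention 0^a = 0 (a > 0 in all uses). *)
Definition rpow (x a : R) : R := if Rle_dec x 0 then 0 else Rpower x a.

(* Vectors in R^d are functions nat -> R (only coordinates 0..d-1 matter). *)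
Fixpoint sumsq (d : nat) (x : nat -> R) : R :=
  match d with
  | O => 0
  | S n => sumsq n x + x n ^ 2
  end.

Definition vnorm (d : nat) (x : nat -> R) : R := sqrt (sumsq d x).
Definition vdist (d : nat) (x y : nat -> R) : R := vnorm d (fun i => x i - y i).

(* alpha-Hoelder seminorm |||f|||_{alpha,[a,b]} w.r.t. a distance dist;
   0 is included so that the empty case (a = b) gives 0. *)
Definition holsemi {X : Type} (dist : X -> X -> R) (alpha : R) (f : R -> X)
    (a b : R) : R :=
  Rsup (fun q => q = 0 \/ exists s t, a <= s /\ s < t /\ t <= b /\
                   q = dist (f t) (f s) / rpow (t - s) alpha).

Definition supnorm {X : Type} (nrm : X -> R) (f : R -> X) (a b : R) : R :=
  Rsup (fun v => exists u, a <= u /\ u <= b /\ v = nrm (f u)).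

Definition holnorm (d : nat) (alpha : R) (z : R -> nat -> R) (a b : R) : R :=
  supnorm (vnorm d) z a b + holsemi (vdist d) alpha z a b.

Definition is_holder {X : Type} (dist : X -> X -> R) (alpha : R) (f : R -> X)
    (a b : R) : Prop :=
  exists K, forall s t, a <= s -> s < t -> t <= b ->
    dist (f t) (f s) <= K * rpow (t - s) alpha.

Definition scal_dist (x y : R) : R := Rabs (x - y).

Definition segment {X : Type} (z : R -> X) (t : R) : R -> X := fun u => z (t + u).

Fixpoint stop_time (C mu beta nu T : R) (omega : R -> R) (i : nat) : R :=
  match i with
  | O => 0
  | S k =>
      let ti := stop_time C mu beta nu T omega k in
      Rsup (fun t => ti <= t /\ t <= T /\
              C * (rpow (t - ti) (1 - beta)
                   + rpow (t - ti) (nu - beta) * holsemi scal_dist nu omega ti t) <= mu)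
  end.

Definition card_is (P : nat -> Prop) (n : nat) : Prop :=
  exists l : list nat, NoDup l /\ (forall i, In i l <-> P i) /\ length l = n.

(* #P if P is finite (0 otherwise; P is finite in the situation of interest) *)
Definition ncard (P : nat -> Prop) : nat :=
  match excluded_middle_informative (exists n, card_is P n) with
  | left H => proj1_sig (constructive_indefinite_description _ H)
  | right _ => O
  end.

Definition Ncount (C mu beta nu T : R) (omega : R -> R) (t : R) : nat :=
  ncard (fun i => (1 <= i)%nat /\ stop_time C mu beta nu T omega i < t).

(* Main.v *)
Require Import Defs.
From Stdlib Require Import Reals Lra Psatz List Classical ClassicalEpsilon FunctionalExtensionality PropExtensionality ZArith Lia.
Open Scope R_scope.

Lemma Rsup_ub (E : R -> Prop) x : bound E -> E x -> x <= Rsup E.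
Proof.
  intros Hb Hx. unfold Rsup.
  destruct (excluded_middle_informative _) as [H|H].
  - destruct (completeness E (proj1 H) (proj2 H)) as [m Hm0]; simpl; destruct Hm0 as [Hm _]. apply Hm; auto.
  - exfalso; apply H; split; eauto.
Qed.

Lemma Rsup_le (E : R -> Prop) x0 M : E x0 -> (forall x, E x -> x <= M) -> Rsup E <= M.
Proof.
  intros H0 HM. unfold Rsup.
  destruct (excluded_middle_informative _) as [H|H].
  - destruct (completeness E (proj1 H) (proj2 H)) as [m Hm0]; simpl; destruct Hm0 as [_ Hm]. apply Hm. intros x Hx; auto.
  - exfalso; apply H; split; eauto. exists M. intros x Hx; auto.
Qed.

Lemma Rsup_gt (E : R -> Prop) x0 c : E x0 -> c < Rsup E -> exists x, E x /\ c < x.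
Proof.
  intros H0 Hc. apply NNPP; intro Hn.
  assert (Rsup E <= c). { apply (Rsup_le _ x0); auto. intros x Hx.
    apply Rnot_lt_le; intro; apply Hn; eauto. }
  lra.
Qed.

Lemma Rsup_ge0 (E : R -> Prop) : (forall x, E x -> 0 <= x) -> 0 <= Rsup E.
Proof.
  intros H. unfold Rsup.
  destruct (excluded_middle_informative _) as [H1|H1]; [|lra].
  destruct (completeness E (proj1 H1) (proj2 H1)) as [m Hm0]; simpl; destruct Hm0 as [Hm _].
  destruct H1 as [_ [x Hx]]. specialize (H x Hx). specialize (Hm x Hx). lra.
Qed.

Lemma rpow_nonneg x a : 0 <= rpow x a.
Proof. unfold rpow. destruct (Rle_dec x 0); [lra|]. unfold Rpower. left; apply exp_pos. Qed.

Lemma rpow_pos x a : 0 < x -> 0 < rpow x a.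
Proof. intro. unfold rpow. destruct (Rle_dec x 0); [lra|]. unfold Rpower. apply exp_pos. Qed.

Lemma rpow_le0 x a : x <= 0 -> rpow x a = 0.
Proof. intro. unfold rpow. destruct (Rle_dec x 0); [lra|]. lra. Qed.

Lemma rpow_mono x y a : 0 < a -> x <= y -> rpow x a <= rpow y a.
Proof.
  intros Ha Hxy. unfold rpow.
  destruct (Rle_dec x 0); destruct (Rle_dec y 0).
  - lra.
  - unfold Rpower; left; apply exp_pos.
  - lra.
  - apply Rle_Rpower_l; lra.
Qed.

Lemma Rpower_1_l a : Rpower 1 a = 1.
Proof. unfold Rpower. rewrite ln_1, Rmult_0_r, exp_0. reflexivity. Qed.

Lemma rpow_le1 x a : 0 < a -> x <= 1 -> rpow x a <= 1.
Proof.
  intros Ha Hx. apply Rle_trans with (rpow 1 a). apply rpow_mono; auto.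
  unfold rpow. destruct (Rle_dec 1 0); [lra|]. rewrite Rpower_1_l; lra.
Qed.

Lemma rpow_ge1 x a : 0 < a -> 1 <= x -> 1 <= rpow x a.
Proof.
  intros Ha Hx. apply Rle_trans with (rpow 1 a).
  unfold rpow. destruct (Rle_dec 1 0); [lra|]. rewrite Rpower_1_l; lra.
  apply rpow_mono; auto.
Qed.

Lemma rpow_small a e : 0 < a -> 0 < e -> exists d, 0 < d /\ forall x, x <= d -> rpow x a <= e.
Proof.
  intros Ha He. exists (Rpower e (/ a)). split.
  - unfold Rpower; apply exp_pos.
  - intros x Hx. apply Rle_trans with (rpow (Rpower e (/ a)) a).
    + apply rpow_mono; auto.
    + unfold rpow. destruct (Rle_dec _ 0) as [h|h].
      * exfalso. unfold Rpower in h. generalize (exp_pos (/ a * ln e)); lra.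
      * rewrite Rpower_mult. rewrite Rinv_l by lra. rewrite Rpower_1; lra.
Qed.

Lemma sumsq_nonneg d x : 0 <= sumsq d x.
Proof. induction d; simpl; nra. Qed.

Lemma vnorm_nonneg d x : 0 <= vnorm d x.
Proof. apply sqrt_pos. Qed.

Lemma sumsq_ext d x y : (forall i, x i = y i) -> sumsq d x = sumsq d y.
Proof. intro H; induction d; simpl; auto. rewrite IHd, H; auto. Qed.

Lemma minkowski d x y : vnorm d (fun i => x i + y i) <= vnorm d x + vnorm d y.
Proof.
  unfold vnorm. induction d; simpl.
  - rewrite sqrt_0; lra.
  - set (P := sumsq d x) in *. set (Q := sumsq d y) in *.
    set (S := sumsq d (fun i => x i + y i)) in *.
    assert (HP : 0 <= P) by apply sumsq_nonneg.
    assert (HQ : 0 <= Q) by apply sumsq_nonneg.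
    assert (HS : 0 <= S) by apply sumsq_nonneg.
    set (a := x d). set (b := y d).
    assert (Hu := sqrt_pos (P + a^2)). assert (Hw := sqrt_pos (Q + b^2)).
    assert (Hp := sqrt_pos P). assert (Hq := sqrt_pos Q).
    assert (Eu := sqrt_sqrt (P + a^2) ltac:(nra)).
    assert (Ew := sqrt_sqrt (Q + b^2) ltac:(nra)).
    assert (Ep := sqrt_sqrt P HP). assert (Eq := sqrt_sqrt Q HQ).
    assert (ES := sqrt_sqrt S HS).
    set (u := sqrt (P + a^2)) in *. set (w := sqrt (Q + b^2)) in *.
    set (p := sqrt P) in *. set (q := sqrt Q) in *.
    assert (HSpq : S <= (p + q)^2).
    { assert (sqrt S <= p + q) by exact IHd. assert (0 <= sqrt S) by apply sqrt_pos. nra. }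
    assert (Hk : p * q + a * b <= u * w).
    { assert ((p*q + a*b)^2 <= (u*w)^2).
      { replace ((u*w)^2) with ((P+a^2)*(Q+b^2)) by (rewrite <- Eu, <- Ew; ring).
        rewrite <- Ep, <- Eq. assert (0 <= (p*b - a*q)^2) by apply pow2_ge_0. nra. }
      assert (0 <= u*w) by nra. nra. }
    apply Rle_trans with (sqrt ((p+q)^2 + (a+b)^2)).
    { apply sqrt_le_1_alt. nra. }
    replace (sqrt (P + a * (a * 1)) + sqrt (Q + b * (b * 1))) with (u + w) by (unfold u, w; f_equal; f_equal; ring).
    rewrite <- (sqrt_Rsqr (u + w)) by lra.
    apply sqrt_le_1_alt. unfold Rsqr. nra.
Qed.

Lemma sumsq_ext2 d x y : (forall i, x i ^ 2 = y i ^ 2) -> sumsq d x = sumsq d y.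
Proof. intro H; induction d; simpl; auto. rewrite IHd. specialize (H d). simpl in H. rewrite H; auto. Qed.

Lemma vdist_sym d x y : vdist d x y = vdist d y x.
Proof. unfold vdist, vnorm. f_equal. apply sumsq_ext2. intros i. ring. Qed.

Lemma vdist_nonneg d x y : 0 <= vdist d x y.
Proof. apply vnorm_nonneg. Qed.

Lemma vdist_tri d x y z : vdist d x z <= vdist d x y + vdist d y z.
Proof.
  unfold vdist. eapply Rle_trans; [|apply minkowski].
  unfold vnorm. right. f_equal. apply sumsq_ext. intros; ring.
Qed.

Lemma vnorm_tri d x y : vnorm d x <= vnorm d y + vdist d x y.
Proof.
  unfold vdist. eapply Rle_trans; [|apply minkowski].
  unfold vnorm. right. f_equal. apply sumsq_ext. intros; ring.
Qed.

Lemma Rsup_ge0' (E : R -> Prop) : E 0 -> 0 <= Rsup E.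
Proof.
  intros H0. unfold Rsup.
  destruct (excluded_middle_informative _) as [H|H]; [|lra].
  destruct (completeness E (proj1 H) (proj2 H)) as [m Hm0]; simpl; destruct Hm0 as [Hm _].
  apply Hm; auto.
Qed.

Section Hol.
Context {X : Type} (dist : X -> X -> R) (alpha : R) (f : R -> X).
Hypothesis dist_nonneg : forall x y, 0 <= dist x y.
Hypothesis Halpha : 0 < alpha.

Lemma holsemi_ge0 a b : 0 <= holsemi dist alpha f a b.
Proof. apply Rsup_ge0'. left; auto. Qed.

Lemma holsemi_bound a0 b0 a b : is_holder dist alpha f a0 b0 -> a0 <= a -> b <= b0 ->
  bound (fun q => q = 0 \/ exists s t, a <= s /\ s < t /\ t <= b /\
                   q = dist (f t) (f s) / rpow (t - s) alpha).
Proof.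
  intros [K HK] Ha Hb. exists (Rmax K 0). intros q [->|[s [t [H1 [H2 [H3 ->]]]]]].
  - apply Rmax_r.
  - assert (Hp : 0 < rpow (t - s) alpha) by (apply rpow_pos; lra).
    apply Rle_trans with K; [|apply Rmax_l].
    specialize (HK s t ltac:(lra) H2 ltac:(lra)).
    unfold Rdiv. apply Rle_trans with (K * rpow (t - s) alpha * / rpow (t - s) alpha).
    + apply Rmult_le_compat_r; auto. left; apply Rinv_0_lt_compat; auto.
    + right. field. lra.
Qed.

Lemma holsemi_pair a0 b0 a b s t : is_holder dist alpha f a0 b0 -> a0 <= a -> b <= b0 ->
  a <= s -> s < t -> t <= b ->
  dist (f t) (f s) <= holsemi dist alpha f a b * rpow (t - s) alpha.
Proof.
  intros Hh Ha Hb H1 H2 H3.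
  assert (Hp : 0 < rpow (t - s) alpha) by (apply rpow_pos; lra).
  assert (dist (f t) (f s) / rpow (t - s) alpha <= holsemi dist alpha f a b).
  { apply Rsup_ub. eapply holsemi_bound; eauto. right. exists s, t. repeat split; auto. }
  apply Rmult_le_compat_r with (r := rpow (t - s) alpha) in H; [|lra].
  unfold Rdiv in H. rewrite Rmult_assoc, Rinv_l, Rmult_1_r in H; lra.
Qed.

Lemma holsemi_le a b M : 0 <= M ->
  (forall s t, a <= s -> s < t -> t <= b -> dist (f t) (f s) <= M * rpow (t - s) alpha) ->
  holsemi dist alpha f a b <= M.
Proof.
  intros HM H. apply Rsup_le with 0. left; auto.
  intros q [->|[s [t [H1 [H2 [H3 ->]]]]]]; auto.
  assert (Hp : 0 < rpow (t - s) alpha) by (apply rpow_pos; lra).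
  specialize (H s t H1 H2 H3).
  apply Rmult_le_reg_r with (rpow (t - s) alpha); auto.
  unfold Rdiv. rewrite Rmult_assoc, Rinv_l, Rmult_1_r; lra.
Qed.

Lemma holsemi_mono a0 b0 a b a' b' : is_holder dist alpha f a0 b0 ->
  a0 <= a' -> a' <= a -> b <= b' -> b' <= b0 ->
  holsemi dist alpha f a b <= holsemi dist alpha f a' b'.
Proof.
  intros Hh H1 H2 H3 H4. apply holsemi_le. apply holsemi_ge0.
  intros s t Hs Hst Ht. eapply holsemi_pair; eauto; lra.
Qed.

End Hol.

Section Sup.
Context {X : Type} (nrm : X -> R) (f : R -> X).
Hypothesis nrm_nonneg : forall x, 0 <= nrm x.

Lemma supnorm_ge0 a b : 0 <= supnorm nrm f a b.
Proof. apply Rsup_ge0. intros x [u [_ [_ ->]]]; auto. Qed.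

Lemma supnorm_pt a b u : bound (fun v => exists u, a <= u /\ u <= b /\ v = nrm (f u)) ->
  a <= u -> u <= b -> nrm (f u) <= supnorm nrm f a b.
Proof. intros Hb H1 H2. apply Rsup_ub; auto. exists u; auto. Qed.

Lemma supnorm_le a b M : a <= b -> (forall u, a <= u -> u <= b -> nrm (f u) <= M) ->
  supnorm nrm f a b <= M.
Proof.
  intros Hab H. apply Rsup_le with (nrm (f a)). exists a; repeat split; auto; lra.
  intros x [u [H1 [H2 ->]]]; auto.
Qed.
End Sup.

Section Z.
Variables (d : nat) (r T beta : R) (z : R -> nat -> R).
Hypothesis hz : is_holder (vdist d) beta z (- r) T.
Hypothesis hb : 0 < beta.

Lemma zsup_bound a b : - r <= a -> b <= T ->
  bound (fun v => exists u, a <= u /\ u <= b /\ v = vnorm d (z u)).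
Proof.
  intros Ha Hb. destruct hz as [K HK].
  exists (vnorm d (z (- r)) + Rabs K * rpow (T + r) beta).
  intros v [u [H1 [H2 ->]]].
  assert (0 <= Rabs K * rpow (T + r) beta) by (apply Rmult_le_pos; [apply Rabs_pos|apply rpow_nonneg]).
  destruct (Req_dec u (- r)) as [->|Hne]; [lra|].
  eapply Rle_trans; [apply (vnorm_tri d _ (z (- r)))|].
  apply Rplus_le_compat_l.
  eapply Rle_trans; [apply (HK (- r) u); lra|].
  apply Rle_trans with (Rabs K * rpow (u - - r) beta).
  - apply Rmult_le_compat_r; [apply rpow_nonneg|apply Rle_abs].
  - apply Rmult_le_compat_l; [apply Rabs_pos|]. apply rpow_mono; lra.
Qed.

Lemma Sz_pt a b u : - r <= a -> b <= T -> a <= u -> u <= b ->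
  vnorm d (z u) <= supnorm (vnorm d) z a b.
Proof. intros. apply supnorm_pt; auto. apply zsup_bound; auto. Qed.

Lemma Sz_mono a b a' b' : - r <= a' -> a' <= a -> a <= b -> b <= b' -> b' <= T ->
  supnorm (vnorm d) z a b <= supnorm (vnorm d) z a' b'.
Proof.
  intros. apply supnorm_le; auto. intros u Hu1 Hu2. apply Sz_pt; lra.
Qed.

Lemma Hz_pair a b s t : - r <= a -> b <= T -> a <= s -> s < t -> t <= b ->
  vdist d (z t) (z s) <= holsemi (vdist d) beta z a b * rpow (t - s) beta.
Proof. intros. eapply holsemi_pair; eauto; try apply vdist_nonneg. Qed.

Lemma Hz_ge0 a b : 0 <= holsemi (vdist d) beta z a b.
Proof. apply holsemi_ge0. Qed.

Lemma Hz_mono a b a' b' : - r <= a' -> a' <= a -> b <= b' -> b' <= T ->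
  holsemi (vdist d) beta z a b <= holsemi (vdist d) beta z a' b'.
Proof. intros. eapply holsemi_mono; eauto; try apply vdist_nonneg. Qed.

Lemma Hz_split a m b : - r <= a -> a <= m -> m <= b -> b <= T ->
  holsemi (vdist d) beta z a b <=
  holsemi (vdist d) beta z a m + holsemi (vdist d) beta z m b.
Proof.
  intros Ha Ham Hmb Hb.
  assert (H1 := Hz_ge0 a m). assert (H2 := Hz_ge0 m b).
  apply holsemi_le; [lra|].
  intros s t Hs Hst Ht.
  assert (Hp := rpow_nonneg (t - s) beta).
  destruct (Rle_dec t m).
  - eapply Rle_trans; [apply (Hz_pair a m); lra|]. nra.
  - destruct (Rle_dec m s).
    + eapply Rle_trans; [apply (Hz_pair m b); lra|]. nra.
    + eapply Rle_trans; [apply (vdist_tri d _ (z m))|].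
      assert (E1 := Hz_pair m b m t ltac:(lra) ltac:(lra) ltac:(lra) ltac:(lra) ltac:(lra)).
      assert (E2 := Hz_pair a m s m ltac:(lra) ltac:(lra) ltac:(lra) ltac:(lra) ltac:(lra)).
      assert (R1 : rpow (t - m) beta <= rpow (t - s) beta) by (apply rpow_mono; lra).
      assert (R2 : rpow (m - s) beta <= rpow (t - s) beta) by (apply rpow_mono; lra).
      assert (rpow (t - m) beta >= 0) by (apply Rle_ge, rpow_nonneg).
      assert (rpow (m - s) beta >= 0) by (apply Rle_ge, rpow_nonneg).
      nra.
Qed.

Lemma Sz_split a m b : - r <= a -> a <= m -> m <= b -> b <= T -> b - m <= 1 ->
  supnorm (vnorm d) z a b <=
  supnorm (vnorm d) z a m + holsemi (vdist d) beta z m b.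
Proof.
  intros Ha Ham Hmb Hb H1.
  assert (G1 := Hz_ge0 m b).
  apply supnorm_le; [lra|]. intros u Hu1 Hu2.
  destruct (Rle_dec u m).
  - assert (vnorm d (z u) <= supnorm (vnorm d) z a m) by (apply Sz_pt; lra). lra.
  - eapply Rle_trans; [apply (vnorm_tri d _ (z m))|].
    apply Rplus_le_compat. apply Sz_pt; lra.
    eapply Rle_trans; [apply (Hz_pair m b); lra|].
    assert (rpow (u - m) beta <= 1) by (apply rpow_le1; lra).
    assert (0 <= rpow (u - m) beta) by apply rpow_nonneg. nra.
Qed.

Lemma Hz_end a b L : - r <= a -> a < b -> b <= T ->
  (forall c, a < c -> c < b -> holsemi (vdist d) beta z a c <= L) ->
  holsemi (vdist d) beta z a b <= L.
Proof.
  intros Ha Hab Hb HL.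
  assert (HL0 : 0 <= L).
  { eapply Rle_trans; [apply (Hz_ge0 a ((a+b)/2))|]. apply HL; lra. }
  apply holsemi_le; [auto|].
  intros s t Hs Hst Ht.
  destruct (Rlt_dec t b).
  - eapply Rle_trans; [apply (Hz_pair a t); lra|].
    apply Rmult_le_compat_r; [apply rpow_nonneg|]. apply HL; lra.
  - assert (t = b) by lra. subst t.
    apply Rle_plus_epsilon. intros eps Heps.
    destruct hz as [K HK].
    destruct (rpow_small beta (eps / (Rabs K + 1)) hb) as [del [Hdel Hd]].
    { apply Rdiv_lt_0_compat; auto. generalize (Rabs_pos K); lra. }
    set (v := Rmax ((s + b) / 2) (b - del)).
    assert (Hv1 : s < v) by (unfold v; eapply Rlt_le_trans; [|apply Rmax_l]; lra).
    assert (Hv2 : v < b) by (unfold v; apply Rmax_lub_lt; lra).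
    assert (Hv3 : b - v <= del) by (unfold v; generalize (Rmax_r ((s + b) / 2) (b - del)); lra).
    eapply Rle_trans; [apply (vdist_tri d _ (z v))|].
    assert (E1 : vdist d (z b) (z v) <= eps).
    { eapply Rle_trans; [apply HK; lra|].
      assert (Hr := Hd (b - v) Hv3). assert (Hr0 := rpow_nonneg (b - v) beta).
      apply Rle_trans with (Rabs K * rpow (b - v) beta).
      apply Rmult_le_compat_r; auto. apply Rle_abs.
      apply Rle_trans with (Rabs K * (eps / (Rabs K + 1))).
      apply Rmult_le_compat_l; auto. apply Rabs_pos.
      assert (0 <= Rabs K) by apply Rabs_pos.
      unfold Rdiv. rewrite <- Rmult_assoc.
      apply Rmult_le_reg_r with (Rabs K + 1); [lra|].
      rewrite Rmult_assoc, Rinv_l by lra. nra. }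
    assert (E2 := Hz_pair a v s v ltac:(lra) ltac:(lra) ltac:(lra) Hv1 ltac:(lra)).
    assert (E3 : holsemi (vdist d) beta z a v <= L) by (apply HL; lra).
    assert (E4 : rpow (v - s) beta <= rpow (b - s) beta) by (apply rpow_mono; lra).
    assert (0 <= rpow (v - s) beta) by apply rpow_nonneg.
    assert (0 <= holsemi (vdist d) beta z a v) by apply Hz_ge0.
    nra.
Qed.

End Z.

Lemma nat_unbounded x : exists n, x < INR n.
Proof.
  destruct (archimed x) as [H1 _].
  destruct (Z_lt_le_dec (up x) 0) as [Hz|Hz].
  - exists 0%nat. simpl. apply IZR_lt in Hz. lra.
  - exists (Z.to_nat (up x)). rewrite INR_IZR_INZ, Z2Nat.id by lia. lra.
Qed.

Lemma ncard_eq (P : nat -> Prop) n : card_is P n -> ncard P = n.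
Proof.
  intros Hn. unfold ncard. destruct (excluded_middle_informative _) as [H|H].
  - destruct (constructive_indefinite_description _ H) as [m Hm]. simpl.
    destruct Hm as [l1 [N1 [M1 L1]]]. destruct Hn as [l2 [N2 [M2 L2]]].
    subst. apply Nat.le_antisymm; apply NoDup_incl_length; auto;
      intros x Hx; [apply M2, M1 | apply M1, M2]; auto.
  - exfalso; apply H; eauto.
Qed.

Lemma least_ex (P : nat -> Prop) k : P k -> exists n, P n /\ forall m, (m < n)%nat -> ~ P m.
Proof.
  revert k. induction k as [k IH] using (well_founded_induction lt_wf). intros Hk.
  destruct (classic (exists m, (m < k)%nat /\ P m)) as [[m [Hm Pm]]|Hn].
  - exact (IH m Hm Pm).
  - exists k. split; auto. intros m Hm Pm. apply Hn; eauto.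
Qed.

Lemma seg_eq d beta (z : R -> nat -> R) r t :
  holnorm d beta (segment z t) (- r) 0 = holnorm d beta z (t - r) t.
Proof.
  unfold holnorm. f_equal.
  - unfold supnorm. f_equal. apply functional_extensionality; intro v.
    apply propositional_extensionality. unfold segment. split.
    + intros [u [H1 [H2 ->]]]. exists (t + u). repeat split; lra.
    + intros [u [H1 [H2 ->]]]. exists (u - t). replace (t + (u - t)) with u by ring.
      repeat split; lra.
  - unfold holsemi. f_equal. apply functional_extensionality; intro q.
    apply propositional_extensionality. unfold segment. split.
    + intros [->|[s [s' [H1 [H2 [H3 ->]]]]]]; [left; auto|right].
      exists (t + s), (t + s'). replace (t + s' - (t + s)) with (s' - s) by ring.
      repeat split; lra.
    + intros [->|[s [s' [H1 [H2 [H3 ->]]]]]]; [left; auto|right].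
      exists (s - t), (s' - t). replace (t + (s - t)) with s by ring.
      replace (t + (s' - t)) with s' by ring. replace (s' - t - (s - t)) with (s' - s) by ring.
      repeat split; lra.
Qed.

Section Main.
Variables (d : nat) (r T nu beta : R) (omega : R -> R) (z : R -> nat -> R) (A C mu : R).
Hypothesis hr : 0 < r.
Hypothesis hT : 0 < T.
Hypothesis hnu : 1/2 < nu /\ nu <= 1.
Hypothesis hbeta : 0 < beta /\ beta < nu.
Hypothesis homega : is_holder scal_dist nu omega 0 T.
Hypothesis homega_lim : forall eps, 0 < eps -> exists h, 0 < h /\
       forall s t, 0 <= s -> s < t -> t <= T -> t - s <= h ->
         Rabs (omega t - omega s) / rpow (t - s) nu <= eps.
Hypothesis hz : is_holder (vdist d) beta z (- r) T.
Hypothesis hA : 0 < A.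
Hypothesis hC : 0 < C.
Hypothesis hmu : 0 < mu /\ mu < Rmin (1/2) C.

Definition Fk (a t : R) : R :=
  C * (rpow (t - a) (1 - beta) + rpow (t - a) (nu - beta) * holsemi scal_dist nu omega a t).

Definition Sk (a : R) : R -> Prop := fun t => a <= t /\ t <= T /\ Fk a t <= mu.

Definition tk (k : nat) : R := stop_time C mu beta nu T omega k.

Lemma tk_S k : tk (S k) = Rsup (Sk (tk k)).
Proof. reflexivity. Qed.

Lemma mu_facts : 0 < mu /\ mu < 1/2 /\ mu < C.
Proof.
  destruct hmu as [h1 h2]. unfold Rmin in h2. destruct (Rle_dec (1/2) C); lra.
Qed.

Lemma Hw_ge0 a b : 0 <= holsemi scal_dist nu omega a b.
Proof. apply holsemi_ge0. Qed.

Lemma Hw_mono a b a' b' : 0 <= a' -> a' <= a -> b <= b' -> b' <= T ->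
  holsemi scal_dist nu omega a b <= holsemi scal_dist nu omega a' b'.
Proof.
  intros. eapply holsemi_mono; eauto; try lra; intros; unfold scal_dist; apply Rabs_pos.

Qed.

Lemma Fk_aa a : Fk a a = 0.
Proof. unfold Fk. rewrite Rminus_diag, !rpow_le0 by lra. ring. Qed.

Lemma Fk_ge0 a t : 0 <= Fk a t.
Proof.
  unfold Fk. apply Rmult_le_pos; [lra|]. apply Rplus_le_le_0_compat; [apply rpow_nonneg|].
  apply Rmult_le_pos; [apply rpow_nonneg|apply Hw_ge0].
Qed.

Lemma Fk_mono a c c' : 0 <= a -> a <= c -> c <= c' -> c' <= T -> Fk a c <= Fk a c'.
Proof.
  intros. unfold Fk. apply Rmult_le_compat_l; [lra|].
  apply Rplus_le_compat. apply rpow_mono; lra.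
  apply Rmult_le_compat; [apply rpow_nonneg|apply Hw_ge0| apply rpow_mono; lra|].
  apply Hw_mono; lra.
Qed.

Lemma Sk_a a : 0 <= a -> a <= T -> Sk a a.
Proof. intros. unfold Sk. rewrite Fk_aa. destruct mu_facts. repeat split; lra. Qed.

Lemma tk_range k : 0 <= tk k /\ tk k <= T.
Proof.
  induction k. simpl. unfold tk; simpl; lra.
  rewrite tk_S. split.
  - apply Rle_trans with (tk k); [lra|]. apply Rsup_ub.
    exists T. intros x [_ [Hx _]]; auto. apply Sk_a; lra.
  - apply Rsup_le with (tk k). apply Sk_a; lra. intros x [_ [Hx _]]; auto.
Qed.

Lemma tk_step k : tk k <= tk (S k).
Proof.
  destruct (tk_range k). rewrite tk_S. apply Rsup_ub.
  exists T. intros x [_ [Hx _]]; auto. apply Sk_a; lra.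
Qed.

Lemma tk_mono i j : (i <= j)%nat -> tk i <= tk j.
Proof.
  induction 1. lra. eapply Rle_trans; [apply IHle|apply tk_step].
Qed.

Lemma tk_in k c : tk k <= c -> c < tk (S k) -> Fk (tk k) c <= mu.
Proof.
  intros H1 H2. destruct (tk_range k). rewrite tk_S in H2.
  destruct (Rsup_gt _ (tk k) c (Sk_a _ H H0) H2) as [x [[Hx1 [Hx2 Hx3]] Hx4]].
  eapply Rle_trans; [|apply Hx3]. apply Fk_mono; lra.
Qed.

Lemma tk_len k : tk (S k) <= tk k + 1.
Proof.
  destruct (tk_range k). rewrite tk_S. apply Rsup_le with (tk k). apply Sk_a; lra.
  intros x [Hx1 [Hx2 Hx3]]. destruct mu_facts as [m1 [m2 m3]].
  apply Rnot_lt_le. intro Hc.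
  assert (1 <= rpow (x - tk k) (1 - beta)) by (apply rpow_ge1; lra).
  unfold Fk in Hx3.
  assert (0 <= rpow (x - tk k) (nu - beta) * holsemi scal_dist nu omega (tk k) x)
    by (apply Rmult_le_pos; [apply rpow_nonneg|apply Hw_ge0]).
  nra.
Qed.

Lemma delta_ex : exists del, 0 < del /\ forall k, Rmin (tk k + del) T <= tk (S k).
Proof.
  destruct mu_facts as [m1 [m2 m3]].
  destruct (homega_lim 1 ltac:(lra)) as [h [Hh Hh']].
  destruct (rpow_small (1 - beta) (mu / (2 * C))) as [d1 [Hd1 Hd1']]; try lra.
  { apply Rdiv_lt_0_compat; lra. }
  destruct (rpow_small (nu - beta) (mu / (2 * C))) as [d2 [Hd2 Hd2']]; try lra.
  { apply Rdiv_lt_0_compat; lra. }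
  exists (Rmin h (Rmin d1 d2)). split.
  { apply Rmin_pos; auto. apply Rmin_pos; auto. }
  intros k. destruct (tk_range k) as [a0 a1]. set (a := tk k) in *.
  set (del := Rmin h (Rmin d1 d2)).
  assert (E1 : del <= h) by apply Rmin_l.
  assert (E2 : del <= d1) by (eapply Rle_trans; [apply Rmin_r|apply Rmin_l]).
  assert (E3 : del <= d2) by (eapply Rle_trans; [apply Rmin_r|apply Rmin_r]).
  assert (Hdp : 0 < del) by (apply Rmin_pos; auto; apply Rmin_pos; auto).
  set (c := Rmin (a + del) T).
  assert (Hc1 : a <= c) by (unfold c, Rmin; destruct (Rle_dec (a + del) T); lra).
  assert (Hc2 : c <= T) by apply Rmin_r.
  assert (Hc3 : c - a <= del) by (unfold c; generalize (Rmin_l (a + del) T); lra).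
  rewrite tk_S. apply Rsup_ub. exists T. intros x [_ [Hx _]]; auto.
  split; auto. split; auto.
  assert (HH : holsemi scal_dist nu omega a c <= 1).
  { apply holsemi_le; [lra|]. intros s t Hs Hst Ht.
    assert (Hp : 0 < rpow (t - s) nu) by (apply rpow_pos; lra).
    assert (Hr := Hh' s t ltac:(lra) Hst ltac:(lra) ltac:(lra)).
    unfold scal_dist.
    apply Rmult_le_compat_r with (r := rpow (t - s) nu) in Hr; [|lra].
    unfold Rdiv in Hr. rewrite Rmult_assoc, Rinv_l, Rmult_1_r in Hr; lra. }
  assert (R1 := Hd1' (c - a) ltac:(lra)). assert (R2 := Hd2' (c - a) ltac:(lra)).
  assert (0 <= rpow (c - a) (nu - beta)) by apply rpow_nonneg.
  assert (0 <= holsemi scal_dist nu omega a c) by apply Hw_ge0.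
  unfold Fk.
  assert (rpow (c - a) (1 - beta) + rpow (c - a) (nu - beta) * holsemi scal_dist nu omega a c
          <= mu / (2 * C) + mu / (2 * C)) by nra.
  apply Rle_trans with (C * (mu / (2 * C) + mu / (2 * C))).
  apply Rmult_le_compat_l. lra. fold a. lra.
  right. field. lra.
Qed.

Lemma tk_reach : exists k, T <= tk k.
Proof.
  destruct delta_ex as [del [Hd Hk]].
  assert (HI : forall k, Rmin (INR k * del) T <= tk k).
  { induction k.
    - simpl. rewrite Rmult_0_l. unfold tk; simpl. apply Rmin_l.
    - eapply Rle_trans; [|apply Hk]. rewrite S_INR.
      unfold Rmin in *. destruct (Rle_dec (INR k * del) T);
        destruct (Rle_dec ((INR k + 1) * del) T); destruct (Rle_dec (tk k + del) T); nra. }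
  destruct (nat_unbounded (T / del)) as [n Hn].
  exists n. specialize (HI n).
  assert (T <= INR n * del).
  { apply Rmult_lt_compat_r with (r := del) in Hn; auto. unfold Rdiv in Hn.
    rewrite Rmult_assoc, Rinv_l, Rmult_1_r in Hn; lra. }
  unfold Rmin in HI. destruct (Rle_dec (INR n * del) T); lra.
Qed.


Hypothesis hgron : forall s t, 0 <= s -> s <= t -> t <= T ->
     holsemi (vdist d) beta z s t
       <= A + C * (rpow (t - s) (1 - beta)
                   + rpow (t - s) (nu - beta) * holsemi scal_dist nu omega s t)
              * holnorm d beta z (s - r) t.

Definition Yk (k : nat) : R := holnorm d beta z (tk k - r) (tk k).

Lemma Yk_ge0 k : 0 <= Yk k.
Proof.
  unfold Yk, holnorm. apply Rplus_le_le_0_compat.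
  apply supnorm_ge0; apply vnorm_nonneg. apply Hz_ge0.
Qed.

Lemma interval_bound k c : tk k <= c -> c <= tk (S k) ->
  holnorm d beta z (c - r) c <= (Yk k + 2 * A) / (1 - 2 * mu).
Proof.
  intros Hc1 Hc2.
  destruct mu_facts as [m1 [m2 m3]].
  destruct (tk_range k) as [a0 a1]. destruct (tk_range (S k)) as [b0 b1].
  assert (Hlen := tk_len k).
  set (a := tk k) in *. set (b := tk (S k)) in *.
  set (Y := Yk k). assert (HY : 0 <= Y) by apply Yk_ge0.
  set (L := (A + mu * Y) / (1 - 2 * mu)).
  assert (HL0 : 0 <= L) by (unfold L; apply Rmult_le_pos; [nra|left; apply Rinv_0_lt_compat; lra]).
  assert (HbT : - r <= a - r) by lra.
  assert (Dec : forall c', a <= c' -> c' <= b ->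
     holnorm d beta z (a - r) c' <= Y + 2 * holsemi (vdist d) beta z a c').
  { intros c' H1 H2. unfold holnorm, Y, Yk. fold a.
    assert (S1 := Sz_split d r T beta z hz (proj1 hbeta) (a - r) a c' HbT ltac:(lra) H1 ltac:(lra) ltac:(lra)).
    assert (S2 := Hz_split d r T beta z hz (proj1 hbeta) (a - r) a c' HbT ltac:(lra) H1 ltac:(lra)).
    unfold holnorm. lra. }
  assert (Cl1 : forall c', a <= c' -> c' < b -> holsemi (vdist d) beta z a c' <= L).
  { intros c' H1 H2.
    assert (HF := tk_in k c' H1 H2). fold a in HF.
    assert (Hg := hgron a c' a0 H1 ltac:(lra)).
    fold (Fk a c') in Hg.
    assert (HN : 0 <= holnorm d beta z (a - r) c').
    { unfold holnorm. apply Rplus_le_le_0_compat. apply supnorm_ge0; apply vnorm_nonneg. apply Hz_ge0. }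
    assert (HD := Dec c' H1 ltac:(lra)).
    assert (Fk a c' * holnorm d beta z (a - r) c' <= mu * holnorm d beta z (a - r) c')
      by (apply Rmult_le_compat_r; auto).
    unfold L. apply Rmult_le_reg_r with (1 - 2 * mu); [lra|].
    unfold Rdiv. rewrite Rmult_assoc, Rinv_l, Rmult_1_r by lra. nra. }
  assert (Cl2 : holsemi (vdist d) beta z a c <= L).
  { destruct (Rlt_dec c b). apply Cl1; lra.
    assert (c = b) by lra. subst c.
    destruct (Rlt_dec a b).
    - apply Hz_end with r T; auto. apply hbeta. lra. intros c' H1 H2. apply Cl1; lra.
    - apply holsemi_le; auto. intros; lra. }
  assert (M1 : holnorm d beta z (c - r) c <= holnorm d beta z (a - r) c).
  { unfold holnorm. apply Rplus_le_compat.
    apply (Sz_mono d r T beta z hz (proj1 hbeta)); lra.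
    apply (Hz_mono d r T beta z hz); lra. }
  assert (HD := Dec c Hc1 Hc2).
  apply Rle_trans with (Y + 2 * L). lra.
  right. unfold L. field. lra.
Qed.

Lemma Yk_bound k : Yk k + A / mu <= (A / mu + Yk 0) / (1 - 2 * mu) ^ k.
Proof.
  destruct mu_facts as [m1 [m2 m3]].
  induction k.
  - simpl. unfold Rdiv. rewrite Rinv_1. lra.
  - assert (H := interval_bound k (tk (S k)) (tk_step k) (Rle_refl _)).
    fold (Yk (S k)) in H.
    assert (E : (Yk k + 2 * A) / (1 - 2 * mu) + A / mu = (Yk k + A / mu) / (1 - 2 * mu))
      by (field; lra).
    apply Rle_trans with ((Yk k + A / mu) / (1 - 2 * mu)). lra.
    replace ((A / mu + Yk 0) / (1 - 2 * mu) ^ S k) with (((A / mu + Yk 0) / (1 - 2 * mu) ^ k) / (1 - 2 * mu))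
      by (simpl; field; repeat split; try apply pow_nonzero; lra).
    unfold Rdiv at 1 3. apply Rmult_le_compat_r. left; apply Rinv_0_lt_compat; lra. exact IHk.
Qed.


Lemma final t : 0 <= t -> t <= T ->
    holnorm d beta (segment z t) (- r) 0
      <= / (1 - 2 * mu) ^ (S (Ncount C mu beta nu T omega t))
         * (A / mu + holnorm d beta z (- r) 0).
Proof.
  intros Ht0 HtT.
  destruct mu_facts as [m1 [m2 m3]].
  destruct tk_reach as [k Hk].
  destruct (least_ex (fun n => t <= tk (S n)) k) as [n [Hn Hmin]].
  { eapply Rle_trans; [|apply tk_step]. lra. }
  assert (Htn : tk n <= t).
  { destruct n. unfold tk; simpl; lra.
    apply Rlt_le, Rnot_le_lt. apply (Hmin n). lia. }
  assert (NC : Ncount C mu beta nu T omega t = n).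
  { unfold Ncount. apply ncard_eq. exists (seq 1 n). split; [apply seq_NoDup|].
    split; [|apply length_seq]. intros i. rewrite in_seq. split.
    - intros [H1 H2]. split; [lia|]. destruct i; [lia|].
      apply Rnot_le_lt. apply (Hmin i). lia.
    - intros [H1 H2]. split; [lia|].
      destruct (Nat.lt_ge_cases i (1 + n)) as [Hl|Hl]; auto.
      assert (tk (S n) <= tk i) by (apply tk_mono; lia).
      assert (tk i < t) by exact H2. lra. }
  rewrite NC, seg_eq.
  assert (HB := interval_bound n t Htn Hn).
  assert (HY := Yk_bound n).
  assert (HYn := Yk_ge0 n).
  assert (E0 : Yk 0 = holnorm d beta z (- r) 0).
  { unfold Yk, tk. simpl. f_equal. ring. }
  rewrite <- E0.
  assert (H2A : 2 * A <= A / mu).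
  { apply Rmult_le_reg_r with mu; auto. replace (A / mu * mu) with A by (field; lra). nra. }
  apply Rle_trans with ((Yk n + A / mu) / (1 - 2 * mu)).
  { eapply Rle_trans; [apply HB|]. unfold Rdiv. apply Rmult_le_compat_r.
    left; apply Rinv_0_lt_compat; lra. lra. }
  replace (/ (1 - 2 * mu) ^ S n * (A / mu + Yk 0)) with
    (((A / mu + Yk 0) / (1 - 2 * mu) ^ n) / (1 - 2 * mu))
    by (simpl; field; repeat split; try apply pow_nonzero; lra).
  unfold Rdiv at 1 3. apply Rmult_le_compat_r. left; apply Rinv_0_lt_compat; lra. exact HY.
Qed.

End Main.

Theorem lemma5
  (d : nat) (r T nu beta : R) (omega : R -> R) (z : R -> nat -> R)
  (A C mu : R)
  (hr : 0 < r) (hT : 0 < T)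
  (hnu : 1/2 < nu /\ nu <= 1) (hbeta : 0 < beta /\ beta < nu)
  (homega : is_holder scal_dist nu omega 0 T)
  (homega_lim : forall eps, 0 < eps -> exists h, 0 < h /\
       forall s t, 0 <= s -> s < t -> t <= T -> t - s <= h ->
         Rabs (omega t - omega s) / rpow (t - s) nu <= eps)
  (hz : is_holder (vdist d) beta z (- r) T)
  (hA : 0 < A) (hC : 0 < C)
  (hmu : 0 < mu /\ mu < Rmin (1/2) C)
  (hgron : forall s t, 0 <= s -> s <= t -> t <= T ->
     holsemi (vdist d) beta z s t
       <= A + C * (rpow (t - s) (1 - beta)
                   + rpow (t - s) (nu - beta) * holsemi scal_dist nu omega s t)
              * holnorm d beta z (s - r) t) :
  forall t, 0 <= t -> t <= T ->
    holnorm d beta (segment z t) (- r) 0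
      <= / (1 - 2 * mu) ^ (S (Ncount C mu beta nu T omega t))
         * (A / mu + holnorm d beta z (- r) 0).
Proof.
  intros t Ht0 HtT. eapply final; eauto.
Qed.
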